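(* Let $(X,d,A)$ be a metric pair with $(X,d)$ $\sigma$-compact, and let $p\in[1,\infty]$. Then $(D(X,A),W_p)$ is $\sigma$-compact.
   Context: A metric on $X$ is a map $d:X\times X\to[0,\infty]$ with $d(x,x)=0$, symmetry and the triangle inequality (infinite distances allowed, $d(x,y)=0$ need not imply $x=y$); a metric pair $(X,d,A)$ is such a space with a closed subset $A$. $D(X,A)$ is the set of finite formal sums of points of $X\setminus A$ (repetitions allowed). A matching of $\hat\alpha=\sum_{i\in I}x_i$, $\hat\beta=\sum_{j\in J}y_j$ is a formal sum $\sum_{k\in K}(x_k,y_{\varphi(k)})+\sum_{i\in I\setminus K}(x_i,z_i)+\sum_{j\in J\setminus\varphi(K)}(w_j,y_j)$ with $K\subset I$, $\varphi$ injective, $z_i,w_j\in A$; its $p$-cost is the $\ell^p$ norm (sup norm if $p=\infty$) of the distances of paired points; $W_p$ is the infimum of $p$-costs. A space is $\sigma$-compact if it is a countable union of compact subspaces. *)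

(* Defs.v *)
From Stdlib Require List.
From HB Require Import structures.
From mathcomp Require Import all_boot all_order all_algebra.
From mathcomp Require Import all_classical all_reals all_analysis.
Set Implicit Arguments. Unset Strict Implicit. Unset Printing Implicit Defensive.
Import Order.TTheory GRing.Theory Num.Theory.
Local Open Scope classical_set_scope.
Local Open Scope ring_scope.

Section Defs.
Variable R : realType.

Definition is_metric (T : Type) (d : T -> T -> \bar R) : Prop :=
  [/\ forall x y, (0 <= d x y)%E,
      forall x, d x x = 0%E,
      forall x y, d x y = d y x &
      forall x y z, (d x z <= d x y + d y z)%E].

Definition dopen (T : Type) (d : T -> T -> \bar R) (U : set T) : Prop :=
  forall x, U x -> exists r : R, 0 < r /\ forall y, (d x y < r%:E)%E -> U y.

Definition dclosed (T : Type) (d : T -> T -> \bar R) (A : set T) : Prop :=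
  dopen d (~` A).

Definition dcompact (T : Type) (d : T -> T -> \bar R) (K : set T) : Prop :=
  forall (I : Type) (U : I -> set T),
    (forall i, dopen d (U i)) ->
    (forall x, K x -> exists i, U i x) ->
    exists s : seq I, forall x, K x -> exists i, List.In i s /\ U i x.

Definition sigma_compact (T : Type) (d : T -> T -> \bar R) : Prop :=
  exists K : nat -> set T, (forall n, dcompact d (K n)) /\ (forall x, exists n, K n x).

(* a formal sum x_0 + ... + x_{n-1} of points of X \ A *)
Record fsum (X : Type) (A : set X) := FSum {
  fs_n : nat;
  fs_pt : 'I_fs_n -> X;
  fs_off : forall i, ~ A (fs_pt i) }.

(* a matching of sum_i x_i (i < n) and sum_j y_j (j < m):
   phi i = Some j  : x_i is paired with y_phi(i)  (i in K, phi injective on K)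
   phi i = None    : x_i is paired with z_i in A
   j not in phi(K) : w_j in A is paired with y_j *)
Definition unmatched n m (phi : 'I_n -> option 'I_m) (j : 'I_m) : bool :=
  [forall i, phi i != Some j].

Record matching (X : Type) (A : set X) n m := Matching {
  m_phi : 'I_n -> option 'I_m;
  m_inj : forall i i' j, m_phi i = Some j -> m_phi i' = Some j -> i = i';
  m_z : 'I_n -> X;
  m_zA : forall i, m_phi i = None -> A (m_z i);
  m_w : 'I_m -> X;
  m_wA : forall j, unmatched m_phi j -> A (m_w j) }.

Definition match_dists (X : Type) (A : set X) (d : X -> X -> \bar R)
  n m (x : 'I_n -> X) (y : 'I_m -> X) (M : matching A n m) : seq (\bar R) :=
  [seq (match m_phi M i with Some j => d (x i) (y j) | None => d (x i) (m_z M i) end)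
    | i <- enum 'I_n]
  ++ [seq d (m_w M j) (y j) | j <- enum 'I_m & unmatched (m_phi M) j].

Definition lp_norm (p : \bar R) (c : seq (\bar R)) : \bar R :=
  match p with
  | +oo%E => \big[Order.max/0%E]_(t <- c) t
  | _ => poweR (\sum_(t <- c) poweR t (fine p))%E (fine p)^-1
  end.

Definition pcost (X : Type) (A : set X) (d : X -> X -> \bar R) (p : \bar R)
  (a b : fsum A) (M : matching A (fs_n a) (fs_n b)) : \bar R :=
  lp_norm p (match_dists d (@fs_pt _ _ a) (@fs_pt _ _ b) M).

Definition Wp (X : Type) (A : set X) (d : X -> X -> \bar R) (p : \bar R)
  (a b : fsum A) : \bar R :=
  ereal_inf [set pcost d p M | M in [set: matching A (fs_n a) (fs_n b)]].

End Defs.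

Arguments Wp {R X} A d p a b.
Arguments fsum {X} A.

(* Main.v *)
From Stdlib Require List.
Require Import Defs.
From HB Require Import structures.
From mathcomp Require Import all_boot all_order all_algebra.
From mathcomp Require Import all_classical all_reals all_analysis.
From mathcomp Require Import lra.
Import Order.TTheory GRing.Theory Num.Theory.
Local Open Scope classical_set_scope.
Local Open Scope ring_scope.
Set Implicit Arguments. Unset Strict Implicit.

Lemma In_pmap (I : Type) (s : seq (option I)) i :
  List.In (Some i) s -> List.In i (pmap id s).
Proof.
elim: s => //= [[a|] s IH] /=.
- by case=> [[->]|/IH]; [left|right].
- by case=> [//|/IH].
Qed.

Lemma dcompact_ext (R : realType) (X : Type) (d : X -> X -> \bar R) (K K' : set X) :
  (forall x, K x <-> K' x) -> dcompact d K -> dcompact d K'.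
Proof.
move=> e cK I U oU cov.
have [s hs] := cK I U oU (fun x kx => cov x ((e x).1 kx)).
by exists s => x /e/hs.
Qed.

Lemma dcompactU (R : realType) (X : Type) (d : X -> X -> \bar R) (K1 K2 : set X) :
  dcompact d K1 -> dcompact d K2 -> dcompact d (fun x => K1 x \/ K2 x).
Proof.
move=> c1 c2 I U oU cov.
have [s1 h1] := c1 I U oU (fun x kx => cov x (or_introl kx)).
have [s2 h2] := c2 I U oU (fun x kx => cov x (or_intror kx)).
exists (s1 ++ s2) => x [/h1|/h2] [i [ii ui]]; exists i; split => //;
  apply: List.in_or_app; by [left|right].
Qed.

Lemma dcompact_closed (R : realType) (X : Type) (d : X -> X -> \bar R) (K F : set X) :
  dcompact d K -> dopen d (~` F) -> dcompact d (fun x => K x /\ F x).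
Proof.
move=> cK oF I U oU cov.
pose U' (o : option I) := match o with Some i => U i | None => ~` F end.
have oU' : forall o, dopen d (U' o) by case.
have cov' : forall x, K x -> exists o, U' o x.
  move=> x kx; have [fx|nfx] := pselect (F x).
  - by have [i ui] := cov x (conj kx fx); exists (Some i).
  - by exists None.
have [s hs] := cK _ U' oU' cov'.
exists (pmap id s) => x [kx fx].
have [[i|] [ii ui]] := hs x kx.
- by exists i; split => //; apply: In_pmap.
- by [].
Qed.

Lemma dcompact0 (R : realType) (X : Type) (d : X -> X -> \bar R) :
  dcompact d (fun _ : X => False).
Proof. by move=> I U _ _; exists [::]. Qed.
Lemma ball_step (R : realType) (X : Type) (d : X -> X -> \bar R) a b c (rho r : R) :
  is_metric d -> 0 < rho -> (d a b + rho%:E < r%:E)%E -> (d b c < (rho/2)%:E)%E ->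
  (d a c + (rho/2)%:E < r%:E)%E.
Proof.
case=> d0 _ _ dtri hr.
have := dtri a b c; have := d0 a b; have := d0 b c; have := d0 a c.
move: (d a b) (d b c) (d a c) => [x||] [y||] [w||] //=; rewrite ?lee_fin ?lte_fin -?EFinD ?lee_fin ?lte_fin; try lra.
Qed.

Lemma lt_of_addlt (R : realType) (e : \bar R) (eta r : R) :
  (0 <= e)%E -> 0 < eta -> (e + eta%:E < r%:E)%E -> (e < r%:E)%E.
Proof.
case: e => [x||] //=; rewrite ?lee_fin ?lte_fin -?EFinD ?lee_fin ?lte_fin; lra.
Qed.

Definition popen (R : realType) (X : Type) (d : X -> X -> \bar R) (k : nat)
  (V : set (nat -> X)) :=
  forall x, V x -> exists r : R, 0 < r /\
    forall y, (forall i, (i < k)%N -> (d (x i) (y i) < r%:E)%E) -> V y.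

Definition Sk (X : Type) (S : set X) (k : nat) (x : nat -> X) :=
  forall i, (i < k)%N -> S (x i).

Definition upd (X : Type) (k : nat) (x : nat -> X) (a : X) :=
  fun i => if i == k then a else x i.

Definition minfold (R : realType) (T : Type) (f : T -> R) (L : seq T) : R :=
  foldr (fun t acc => Num.min (if 0 < f t then f t / 2 else 1) acc) 1 L.

Lemma minfold_gt0 (R : realType) (T : Type) (f : T -> R) L : 0 < minfold f L.
Proof.
elim: L => [|t L IH] /=; first lra.
rewrite lt_min IH andbT; case: ifP => h; last lra.
by rewrite divr_gt0.
Qed.

Lemma minfold_le (R : realType) (T : Type) (f : T -> R) L t :
  List.In t L -> 0 < f t -> minfold f L <= f t / 2.
Proof.
elim: L => [|t' L IH] //= [->|/IH h] ft.
- by rewrite ft ge_min lexx.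
- by rewrite ge_min (h ft) orbT.
Qed.

Lemma prod_compact (R : realType) (X : Type) (d : X -> X -> \bar R) (S : set X) :
  is_metric d -> dcompact d S -> forall k (I : Type) (U : I -> set (nat -> X)),
  (forall i, popen d k (U i)) -> (forall x, Sk S k x -> exists i, U i x) ->
  exists s, forall x, Sk S k x -> exists i, List.In i s /\ U i x.
Proof.
move=> md cS; have [d0 dxx dsym dtri] := md.
elim=> [|k IH] I U oU cov.
  have [[x0 _]|nx] := pselect (exists x0 : nat -> X, True).
  - have [i0 ui0] := cov x0 (fun i (hi : (i < 0)%N) => False_ind _ (notF hi)).
    have [r [r0 hr]] := oU i0 x0 ui0.
    exists [:: i0] => x _; exists i0; split; first by left.
    by apply: hr.
  - by exists [::] => x; exfalso; apply: nx; exists x.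
pose Tube (a : X) (rho : R) := exists s, forall z, Sk S k.+1 z ->
  (d a (z k) < rho%:E)%E -> exists i, List.In i s /\ U i z.
have claim1 : forall a, S a -> exists rho, 0 < rho /\ Tube a rho.
  move=> a Sa.
  pose W (t : (nat -> X) * R * I) (y : nat -> X) :=
    let: (x, r, j) := t in 0 < r /\
     (forall z, (forall i, (i < k.+1)%N -> (d (upd k x a i) (z i) < r%:E)%E) -> U j z) /\
     exists rho, 0 < rho /\ forall i, (i < k)%N -> (d (x i) (y i) + rho%:E < (r/2)%:E)%E.
  have oW : forall t, popen d k (W t).
    move=> [[x r] j] y [r0 [good [rho [rho0 hrho]]]].
    exists (rho/2); split; first by rewrite divr_gt0.
    move=> z hz; split=> //; split=> //; exists (rho/2); split; first by rewrite divr_gt0.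
    by move=> i ik; apply: (ball_step md rho0 (hrho i ik) (hz i ik)).
  have covW : forall y, Sk S k y -> exists t, W t y.
    move=> y Sy.
    have Su : Sk S k.+1 (upd k y a).
      move=> i ik; rewrite /upd; case: eqP => // /eqP ne.
      by apply: Sy; rewrite ltn_neqAle ne -ltnS.
    have [j uj] := cov _ Su.
    have [r [r0 hr]] := oU j _ uj.
    exists (y, r, j); split=> //; split=> //.
    exists (r/4); split; first by rewrite divr_gt0.
    move=> i _; rewrite dxx add0e lte_fin; lra.
  have [L hL] := IH _ W oW covW.
  pose f (t : (nat -> X) * R * I) := t.1.2.
  exists (minfold f L); split; first exact: minfold_gt0.
  exists (map (fun t => t.2) L) => z Sz dz.
  have Sz' : Sk S k z by move=> i ik; apply: Sz; apply: ltnW.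
  have [[[x r] j] [inL [r0 [good [rho [rho0 hrho]]]]]] := hL z Sz'.
  exists j; split; first exact: (List.in_map (fun t => t.2) L (x, r, j) inL).
  apply: good => i ik; rewrite /upd; case: eqP => [->|/eqP ne].
    apply: (lt_le_trans dz); rewrite lee_fin.
    have := @minfold_le _ _ f L _ inL r0; rewrite /f /=; lra.
  have ik' : (i < k)%N by rewrite ltn_neqAle ne -ltnS.
  have := lt_of_addlt (d0 _ _) rho0 (hrho i ik').
  move=> h; apply: (lt_le_trans h); rewrite lee_fin; lra.
pose B (p : X * R) (b : X) := S p.1 /\ 0 < p.2 /\ Tube p.1 p.2 /\
  exists eta, 0 < eta /\ (d p.1 b + eta%:E < p.2%:E)%E.
have oB : forall p, dopen d (B p).
  move=> [a rho] b [Sa [rho0 [tb [eta [eta0 he]]]]].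
  exists (eta/2); split; first by rewrite divr_gt0.
  move=> c hc; split=> //; split=> //; split=> //.
  exists (eta/2); split; first by rewrite divr_gt0.
  exact: (ball_step md eta0 he hc).
have covB : forall b, S b -> exists p, B p b.
  move=> b Sb; have [rho [rho0 tb]] := claim1 b Sb.
  exists (b, rho); split=> //; split=> //; split=> //.
  exists (rho/2); split; first by rewrite divr_gt0.
  rewrite /= dxx add0e lte_fin; lra.
have [Lp hLp] := cS _ B oB covB.
have comb : forall L : seq (X * R), exists s, forall p, List.In p L -> Tube p.1 p.2 ->
    forall z, Sk S k.+1 z -> (d p.1 (z k) < p.2%:E)%E -> exists i, List.In i s /\ U i z.
  elim=> [|p L [s hs]]; first by exists [::].
  have [[sp hsp]|ntp] := pselect (Tube p.1 p.2).
  - exists (sp ++ s) => q /= [<-|qL] tq z Sz dz.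
    + have [i [ii ui]] := hsp z Sz dz; exists i; split=> //.
      by apply: List.in_or_app; left.
    + have [i [ii ui]] := hs q qL tq z Sz dz; exists i; split=> //.
      by apply: List.in_or_app; right.
  - exists s => q /= [<-|qL] tq z Sz dz; first by [].
    exact: (hs q qL tq z Sz dz).
have [s hs] := comb Lp.
exists s => z Sz.
have [p [pL [_ [_ [tp [eta [eta0 he]]]]]]] := hLp (z k) (Sz k (ltnSn k)).
exact: (hs p pL tp z Sz (lt_of_addlt (d0 _ _) eta0 he)).
Qed.

Lemma sum_poweR_fin (R : realType) (c : seq (\bar R)) (q : R) :
  (forall t, t \in c -> (0 <= t)%E /\ t != +oo%E) ->
  (\sum_(t <- c) poweR t q)%E = (\sum_(t <- c) (fine t) `^ q)%:E.
Proof.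
elim: c => [|t c IH] h; first by rewrite !big_nil.
rewrite !big_cons IH; last by move=> u uc; apply: h; rewrite in_cons uc orbT.
have [t0 ty] := h t (mem_head _ _).
by move: t t0 ty {h} => [x||] //= _ _; rewrite EFinD.
Qed.

Lemma sum_powR_le (R : realType) (c : seq R) (q δ : R) :
  0 <= q -> (forall t, t \in c -> 0 <= t <= δ) ->
  \sum_(t <- c) t `^ q <= (size c)%:R * δ `^ q.
Proof.
move=> q0; elim: c => [|t c IH] h; first by rewrite big_nil mul0r.
rewrite big_cons /= -addn1 natrD mulrDl mul1r addrC.
apply: lerD; first by apply: IH => u uc; apply: h; rewrite in_cons uc orbT.
have /andP[t0 td] := h t (mem_head _ _).
apply: ge0_ler_powR => //; rewrite nnegrE //; exact: le_trans td.
Qed.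

Lemma lp_bound (R : realType) (p : \bar R) (c : seq (\bar R)) (δ : R) :
  (1 <= p)%E -> 0 <= δ -> (forall t, t \in c -> (0 <= t)%E /\ (t <= δ%:E)%E) ->
  (lp_norm p c <= (((size c)%:R + 1) * δ)%:E)%E.
Proof.
move=> p1 d0 h.
have dle : δ <= ((size c)%:R + 1) * δ.
  rewrite -[X in X <= _]mul1r ler_wpM2r // lerDr; exact: ler0n.
case: p p1 => [q||] //=; last first.
  move=> _; apply: (@le_trans _ _ δ%:E); last by rewrite lee_fin.
  clear dle; elim: c h => [|t c IH] h; first by rewrite big_nil lee_fin.
  rewrite big_cons ge_max (h t (mem_head _ _)).2 /=.
  by apply: IH => u uc; apply: h; rewrite in_cons uc orbT.
rewrite lee_fin => q1.
rewrite sum_poweR_fin; last first.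
  move=> t tc; have [t0 td] := h t tc; split=> //.
  by apply/negP => /eqP ty; move: td; rewrite ty.
rewrite poweR_EFin lee_fin.
have hc : forall t, t \in [seq fine u | u <- c] -> 0 <= t <= δ.
  move=> t /mapP [u uc ->]; have [u0 ud] := h u uc.
  by move: u u0 ud {uc} => [x||] //=; rewrite ?lee_fin => -> ->.
have := sum_powR_le (ltW (lt_le_trans ltr01 q1)) hc.
rewrite big_map size_map => hs.
have q0 : 0 < q by exact: lt_le_trans ltr01 q1.
have qi0 : 0 <= q^-1 by rewrite invr_ge0 ltW.
apply: (le_trans (ge0_ler_powR qi0 _ _ hs)); rewrite ?nnegrE.
- by apply: sumr_ge0 => t _; apply: powR_ge0.
- by apply: mulr_ge0; [apply: ler0n|apply: powR_ge0].
rewrite powRM ?powR_ge0 ?ler0n // -powRrM mulfV ?gt_eqF // powRr1 //.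
rewrite ler_wpM2r //.
have [->|n0] := eqVneq (size c) 0%N.
  by rewrite powR0 ?gt_eqF ?invr_gt0 // ler0n.
apply: (le_trans (ler1_powR _ _)); rewrite ?lerDl ?ler01 //.
  by rewrite ler1n lt0n.
by rewrite invf_le1.
Qed.

Definition ext (X : Type) (A : set X) (x0 : X) (a : fsum A) : nat -> X :=
  fun i => match (insub i : option 'I_(fs_n a)) with Some o => @fs_pt _ _ a o | None => x0 end.

Lemma ext_val (X : Type) (A : set X) (x0 : X) (a : fsum A) (o : 'I_(fs_n a)) :
  ext x0 a (val o) = @fs_pt _ _ a o.
Proof. by rewrite /ext valK. Qed.

Definition idmatch (X : Type) (A : set X) (a b : fsum A) (e : fs_n a = fs_n b) :
  matching A (fs_n a) (fs_n b).
Proof.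
refine (@Matching X A (fs_n a) (fs_n b) (fun i => Some (cast_ord e i)) _
   (@fs_pt X A a) _ (@fs_pt X A b) _).
- move=> i i' j h1 h2; apply: (@cast_ord_inj _ _ e); congruence.
- by [].
- move=> j /forallP /(_ (cast_ord (esym e) j)); by rewrite cast_ordKV eqxx.
Defined.

Lemma Wp_close0 (R : realType) (X : Type) (d : X -> X -> \bar R) (A : set X) (p : \bar R)
  (a b : fsum A) (e : fs_n a = fs_n b) (δ : R) :
  is_metric d -> (1 <= p)%E -> 0 <= δ ->
  (forall i, (d (@fs_pt _ _ a i) (@fs_pt _ _ b (cast_ord e i)) <= δ%:E)%E) ->
  (Wp A d p a b <= ((((fs_n a).*2)%:R + 1) * δ)%:E)%E.
Proof.
move=> md p1 d0 h.
have [dge0 _ _ _] := md.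
apply: (@le_trans _ _ (pcost d p (idmatch e))).
  by apply: ereal_inf_lbound; exists (idmatch e).
rewrite /pcost.
set c := match_dists _ _ _ _.
apply: (le_trans (lp_bound p1 d0 _)).
  move=> t; rewrite /c /match_dists mem_cat => /orP [] /mapP [i ii ->] /=.
  - by split=> //; apply: h.
  - move: ii; rewrite mem_filter => /andP [] /forallP /(_ (cast_ord (esym e) i)).
    by rewrite /= cast_ordKV eqxx.
rewrite lee_fin ler_wpM2r // lerD2r ler_nat /c /match_dists size_cat !size_map.
rewrite -enumT size_enum_ord -addnn leq_add2l.
rewrite size_filter; apply: (leq_trans (count_size _ _) _).
by rewrite size_enum_ord e.
Qed.

Lemma ext_lt (X : Type) (A : set X) (x0 : X) (a : fsum A) i (h : (i < fs_n a)%N) :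
  ext x0 a i = @fs_pt _ _ a (Ordinal h).
Proof. by rewrite -(@ext_val _ _ x0 a (Ordinal h)). Qed.

Lemma Wp_close (R : realType) (X : Type) (d : X -> X -> \bar R) (A : set X) (p : \bar R)
  (x0 : X) (a b : fsum A) (k : nat) (δ : R) :
  is_metric d -> (1 <= p)%E -> 0 <= δ -> fs_n a = k -> fs_n b = k ->
  (forall i, (i < k)%N -> (d (ext x0 a i) (ext x0 b i) <= δ%:E)%E) ->
  (Wp A d p a b <= (((k.*2)%:R + 1) * δ)%:E)%E.
Proof.
move=> md p1 d0 ea eb h.
have e : fs_n a = fs_n b by rewrite ea eb.
rewrite -ea; apply: (@Wp_close0 R X d A p a b e δ md p1 d0) => i.
have hi : (val i < k)%N by rewrite -ea ltn_ord.
have := h _ hi.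
by rewrite ext_val -[val i]/(val (cast_ord e i)) ext_val.
Qed.

Lemma image_compact (R : realType) (X : Type) (d : X -> X -> \bar R) (A : set X)
  (p : \bar R) (S : set X) (k : nat) :
  is_metric d -> (1 <= p)%E -> dcompact d S -> (forall x, S x -> ~ A x) ->
  dcompact (Wp A d p) (fun b : fsum A => fs_n b = k /\ forall i, S (@fs_pt _ _ b i)).
Proof.
move=> md p1 cS SA I U oU cov.
have [d0 dxx dsym dtri] := md.
pose C := (fun b : fsum A => fs_n b = k /\ forall i, S (@fs_pt _ _ b i)).
suff : exists s, forall b, C b -> exists i, List.In i s /\ U i b by [].
have {}cov : forall b, C b -> exists i, U i b := cov.
have [[b0 Cb0]|nC] := pselect (exists b0, C b0); last first.
  by exists [::] => b Cb; exfalso; apply: nC; exists b.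
have [j0 uj0] := cov b0 Cb0.
case: (posnP k) => [k0|kpos].
  have [r [r0 hr]] := oU j0 b0 uj0.
  exists [:: j0] => c Cc; exists j0; split; first by left.
  apply: hr.
  have e : fs_n b0 = fs_n c by rewrite (proj1 Cb0) (proj1 Cc).
  apply: (le_lt_trans (@Wp_close0 R X d A p b0 c e (r/2) md p1 _ _)).
  - by rewrite divr_ge0 // ltW.
  - by move=> i; exfalso; have := ltn_ord i; rewrite [X in (_ < X)%N](proj1 Cb0) k0.
  - by rewrite (proj1 Cb0) k0 double0 mulr0n add0r mul1r lte_fin; lra.
have hb0 : (0 < fs_n b0)%N by rewrite (proj1 Cb0).
pose x0 := @fs_pt _ _ b0 (Ordinal hb0).
pose V (t : fsum A * I * R) (x : nat -> X) :=
  let: (b, j, δ) := t in C b /\ 0 < δ /\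
   (forall c, C c -> (forall i, (i < k)%N -> (d (ext x0 b i) (ext x0 c i) < δ%:E)%E) -> U j c) /\
   exists rho, 0 < rho /\ forall i, (i < k)%N -> (d (ext x0 b i) (x i) + rho%:E < δ%:E)%E.
have oV : forall t, popen d k (V t).
  move=> [[b j] δ] x [Cb [δ0 [good [rho [rho0 hrho]]]]].
  exists (rho/2); split; first by rewrite divr_gt0.
  move=> y hy; split=> //; split=> //; split=> //.
  exists (rho/2); split; first by rewrite divr_gt0.
  by move=> i ik; apply: (ball_step md rho0 (hrho i ik) (hy i ik)).
have covV : forall x, Sk S k x -> exists t, V t x.
  move=> x Sx.
  have offA : forall i : 'I_k, ~ A (x i) by move=> i; apply: SA; apply: Sx.
  pose b := @FSum X A k (fun i : 'I_k => x i) offA.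
  have Cb : C b by split=> // i; apply: Sx.
  have eb : forall i, (i < k)%N -> ext x0 b i = x i.
    by move=> i ik; rewrite (@ext_lt _ _ x0 b i ik).
  have [j uj] := cov b Cb.
  have [r [r0 hr]] := oU j b uj.
  pose n : R := (k.*2)%:R.
  have n0 : 0 <= n by apply: ler0n.
  pose δ := r / (n + 2).
  have δ0 : 0 < δ by rewrite divr_gt0 // ltr_wpDl.
  exists (b, j, δ); split=> //; split=> //; split.
    move=> c Cc hc; apply: hr.
    apply: (le_lt_trans (@Wp_close R X d A p x0 b c k δ md p1 (ltW δ0) erefl (proj1 Cc) _)).
      by move=> i ik; apply: ltW; apply: hc.
    rewrite lte_fin -/n.
    have -> : r = (n + 2) * δ by rewrite /δ mulrC divfK // gt_eqF // ltr_wpDl.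
    by rewrite ltr_pM2r // ltrD2l ltr1n.
  exists (δ/2); split; first by rewrite divr_gt0.
  by move=> i ik; rewrite eb // dxx add0e lte_fin; lra.
have [L hL] := prod_compact md cS oV covV.
exists (map (fun t => t.1.2) L) => c Cc.
have Sc : Sk S k (ext x0 c).
  move=> i ik; have ic : (i < fs_n c)%N by rewrite (proj1 Cc).
  by rewrite (@ext_lt _ _ x0 c i ic); apply: (proj2 Cc).
have [[[b j] δ] [inL [Cb [δ0 [good [rho [rho0 hrho]]]]]]] := hL _ Sc.
exists j; split; first exact: (List.in_map (fun t => t.1.2) L (b, j, δ) inL).
apply: good => // i ik.
exact: (lt_of_addlt (d0 _ _) rho0 (hrho i ik)).
Qed.

Lemma tri_lt (R : realType) (X : Type) (d : X -> X -> \bar R) x z w (y eps : R) :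
  is_metric d -> d x z = y%:E -> (d x w < (eps - y)%:E)%E -> (d w z < eps%:E)%E.
Proof.
case=> d0 _ dsym dtri e hw.
have := dtri w x z; rewrite e (dsym w x); have := d0 x w; have := d0 w z.
move: hw; move: (d x w) (d w z) => [u||] [v||] //=;
  rewrite ?lee_fin ?lte_fin -?EFinD ?lee_fin ?lte_fin; lra.
Qed.

Lemma inv_le (R : realType) (m n : nat) : (m <= n)%N ->
  ((n.+1)%:R : R)^-1 <= ((m.+1)%:R)^-1.
Proof.
move=> mn; rewrite lef_pV2 ?posrE ?ltr0Sn // ler_nat ltnS //.
Qed.

Definition Kc (X : Type) (K : nat -> set X) (N : nat) : set X :=
  fun x => exists n, (n <= N)%N /\ K n x.

Lemma Kc_compact (R : realType) (X : Type) (d : X -> X -> \bar R) (K : nat -> set X) :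
  (forall n, dcompact d (K n)) -> forall N, dcompact d (Kc K N).
Proof.
move=> cK; elim=> [|N IH].
  apply: (dcompact_ext _ (cK 0%N)) => x; split; first by exists 0%N.
  by case=> n []; rewrite leqn0 => /eqP ->.
apply: (dcompact_ext _ (dcompactU IH (cK N.+1))) => x; split.
  case=> [[n [nN kx]]|kx]; first by exists n; split=> //; apply: leqW.
  by exists N.+1.
case=> n []; rewrite leq_eqVlt => /orP [/eqP -> kx|nN kx]; first by right.
by left; exists n.
Qed.
Unset Implicit Arguments.

Theorem proposition7p16 (R : realType) (X : Type) (d : X -> X -> \bar R)
  (A : set X) (p : \bar R) :
  is_metric d -> dclosed d A -> sigma_compact d ->
  (1 <= p)%E ->
  sigma_compact (Wp A d p).
Proof.
move=> md cA [K [cK covK]] p1.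
have [d0 dxx dsym dtri] := md.
pose F (m : nat) : set X := fun x => forall z, A z -> ((((m.+1)%:R : R)^-1)%:E <= d x z)%E.
have oF : forall m, dopen d (~` F m).
  move=> m x nF.
  have [z [Az hz]] : exists z, A z /\ (d x z < (((m.+1)%:R : R)^-1)%:E)%E.
    apply: contra_notP nF => nz z Az; rewrite leNgt; apply/negP => lt.
    by apply: nz; exists z.
  have := d0 x z; move: hz; case ez: (d x z) => [y||] //=; rewrite ?lte_fin ?lee_fin => hy y0.
  exists ((((m.+1)%:R : R)^-1) - y); split; first by rewrite subr_gt0.
  move=> w hw Fw; have := Fw z Az; rewrite leNgt => /negP; apply.
  exact: (tri_lt md ez hw).
pose S (N m : nat) : set X := fun x => Kc K N x /\ F m x.
have cS : forall N m, dcompact d (S N m).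
  by move=> N m; apply: dcompact_closed; [apply: Kc_compact|apply: oF].
have SA : forall N m x, S N m x -> ~ A x.
  move=> N m x [_ Fx] Ax; have := Fx x Ax; rewrite dxx lee_fin leNgt => /negP; apply.
  by rewrite invr_gt0 ltr0Sn.
pose C (t : nat * nat * nat) : set (fsum A) :=
  let: (k, N, m) := t in fun b => fs_n b = k /\ forall i, S N m (@fs_pt _ _ b i).
pose Kf (n : nat) : set (fsum A) :=
  match (unpickle n : option (nat * nat * nat)) with Some t => C t | None => fun _ => False end.
exists Kf; split.
  move=> n; rewrite /Kf; case: (unpickle n) => [[[k N] m]|]; last exact: dcompact0.
  exact: (@image_compact R X d A p (S N m) k md p1 (cS N m) (SA N m)).
move=> b.
have hi : forall i : 'I_(fs_n b), exists nm : nat * nat,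
    K nm.1 (@fs_pt _ _ b i) /\ F nm.2 (@fs_pt _ _ b i).
  move=> i; set x := @fs_pt _ _ b i.
  have [n kn] := covK x.
  have [r [r0 hr]] := cA x (@fs_off _ _ b i).
  pose m := Num.Def.archi_bound (r^-1).
  exists (n, m); split=> // z Az /=.
  have : ~ (d x z < r%:E)%E by move=> /hr; apply.
  move/negP; rewrite -leNgt => rle; apply: le_trans rle; rewrite lee_fin.
  rewrite -[leRHS]invrK lef_pV2 ?posrE ?invr_gt0 ?ltr0Sn //.
  apply: ltW; apply: (lt_le_trans (archi_boundP _)); first by rewrite invr_ge0 ltW.
  by rewrite ler_nat.
have [f hf] := choice hi.
pose N := (\max_(i < fs_n b) (f i).1)%N.
pose m := (\max_(i < fs_n b) (f i).2)%N.
exists (pickle (fs_n b, N, m)); rewrite /Kf pickleK /=; split=> // i; split.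
  by exists (f i).1; split; [apply: (leq_bigmax (F := fun i => (f i).1))|apply: (hf i).1].
move=> z Az; apply: le_trans ((hf i).2 z Az); rewrite lee_fin; apply: inv_le.
exact: (leq_bigmax (F := fun i => (f i).2)).
Qed.
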